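(* Let $T=\{0,\dots,N\}$ and $\mathbb{F}$ a field. Let $C_\bullet$, $C'_\bullet$ be filtrations of finite-dimensional chain complexes $C$, $C'$ over $\mathbb{F}$ with filtration compatible ordered bases $\mathfrak{C}$, $\mathfrak{C}'$ (each of size $n$) and filtration boundary matrices $D$, $D'$. Let $\varphi_\bullet\colon C_\bullet\to C'_\bullet$ be an injective morphism of filtrations of chain complexes with $\varphi=\varphi_N$ an isomorphism, $F$ its matrix with respect to $\mathfrak{C},\mathfrak{C}'$, and $D^{\varphi}=DF^{-1}=F^{-1}D'$. Let $V'$ and $V^{\varphi}$ be invertible upper-triangular matrices such that $R'=D'V'$ and $R^{\varphi}=D^{\varphi}V^{\varphi}$ are reduced. Then for every index $j$, the column $r^{\varphi}_j$ is zero if and only if the column $r'_j$ is zero.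
   Context: A chain complex is a finite-dimensional graded vector space with differential $\partial$ of degree $-1$, $\partial^2=0$; a filtration of chain complexes is a chain of subcomplexes $C_0\subseteq\dots\subseteq C_N=C$. A basis $\mathfrak{M}$ of $M_N$ is filtration compatible if $\mathfrak{M}\cap M_t$ is a basis of $M_t$ for all $t$; an ordered such basis is a filtration compatible ordered basis if $m\le m'$ implies $\{t\mid m'\in M_t\}\subseteq\{t\mid m\in M_t\}$. The filtration boundary matrix is the matrix of $\partial$ in that basis. For a matrix $X$, $x_j$ is its $j$-th column; for a nonzero column, its pivot is the largest row index of a nonzero entry; $X$ is reduced if no two nonzero columns have the same pivot. *)

(* Defs.v *)
From HB Require Import structures.
From mathcomp Require Import all_boot all_order all_algebra.
Set Implicit Arguments. Unset Strict Implicit. Unset Printing Implicit Defensive.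
Import GRing.Theory.
Local Open Scope ring_scope.

(* Pivot of column j of X (as a nat): the largest row index i with X i j != 0.
   Only meaningful (and only used) for nonzero columns. *)
Definition pivot (K : fieldType) (m n : nat) (X : 'M[K]_(m, n)) (j : 'I_n) : nat :=
  \max_(i < m | X i j != 0) (i : nat).

Definition reduced (K : fieldType) (m n : nat) (X : 'M[K]_(m, n)) : Prop :=
  forall j1 j2 : 'I_n, j1 != j2 -> col j1 X != 0 -> col j2 X != 0 ->
    pivot X j1 != pivot X j2.

Definition upper_triangular (K : fieldType) (n : nat) (V : 'M[K]_n) : Prop :=
  forall i j : 'I_n, (j < i)%N -> V i j = 0.

(* A filtration C_0 <= ... <= C_N = C of a finite-dimensional chain complex,
   presented through a filtration compatible ordered (homogeneous) basis
   c_0 < ... < c_(n-1):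
   - deg i   : the homological degree of the basis vector c_i,
   - birth i : the least t with c_i in C_t (so c_i in C_t iff birth i <= t);
               the ordering condition says birth is nondecreasing,
   - D       : the filtration boundary matrix (column j = coordinates of
               the boundary of c_j).
   C_t is the span of {c_i | birth i <= t}; each C_t is a subcomplex. *)
Definition filtered_complex (K : fieldType) (N n : nat) (deg : 'I_n -> nat)
    (birth : 'I_n -> 'I_N.+1) (D : 'M[K]_n) : Prop :=
  [/\ forall i j : 'I_n, (i <= j)%N -> (birth i <= birth j)%N,
      D *m D = 0,
      forall i j : 'I_n, D i j != 0 -> deg j = (deg i).+1 &
      forall i j : 'I_n, D i j != 0 -> (birth i <= birth j)%N].

(* Fm is the matrix (column j = coordinates of phi(c_j) in the basis c'),
   of an injective morphism of filtrations of chain complexes phi_. *)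
Definition injective_filt_morphism (K : fieldType) (N n : nat)
    (deg deg' : 'I_n -> nat) (birth birth' : 'I_n -> 'I_N.+1)
    (D D' Fm : 'M[K]_n) : Prop :=
  [/\ Fm *m D = D' *m Fm,
      forall i j : 'I_n, Fm i j != 0 -> deg' i = deg j,
      forall i j : 'I_n, Fm i j != 0 -> (birth' i <= birth j)%N
                                         (* phi(C_t) <= C'_t *) &
      forall (t : 'I_N.+1) (v : 'cV[K]_n),
        (forall i : 'I_n, (t < birth i)%N -> v i 0 = 0) ->
        Fm *m v = 0 -> v = 0                      (* each phi_t injective *)].

(* Main.v *)
Require Import Defs.
From HB Require Import structures.
From mathcomp Require Import all_boot all_order all_algebra.
Import GRing.Theory.
Local Open Scope ring_scope.
Set Implicit Arguments. Unset Strict Implicit. Unset Printing Implicit Defensive.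

Section Aux.
Variable K : fieldType.

Lemma pivot_ge m n (Y : 'M[K]_(m, n)) (i : 'I_m) (j : 'I_n) :
  Y i j != 0 -> (i <= pivot Y j)%N.
Proof. by move=> H; rewrite /pivot; apply: (leq_bigmax_cond i H). Qed.

Lemma pivot_att m n (Y : 'M[K]_(m, n)) (j : 'I_n) :
  col j Y != 0 -> exists i : 'I_m, (i : nat) = pivot Y j /\ Y i j != 0.
Proof.
move=> H.
have: (0 < #|[pred i : 'I_m | Y i j != 0%R]|)%N.
  apply/card_gt0P; apply/existsP; apply: contraR H => /existsPn H.
  apply/eqP/matrixP => i k; rewrite !mxE; rewrite ?(ord1 k).
  by move: (H i) => /negbNE /eqP.
move=> /(eq_bigmax_cond (fun i : 'I_m => (i : nat))) [i0 Hi0 E].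
exists i0; split; last by [].
by rewrite /pivot E.
Qed.

Lemma indep m n (Y : 'M[K]_(m, n)) (d : 'cV[K]_n) :
  reduced Y -> (forall i, col i Y == 0 -> d i 0 = 0) -> Y *m d = 0 -> d = 0.
Proof.
move=> Hred Hz Hd.
apply/eqP; apply/negPn/negP => Hne.
have: (0 < #|[pred i : 'I_n | d i ord0 != 0%R]|)%N.
  apply/card_gt0P; apply/existsP; apply: contraR Hne => /existsPn H.
  apply/eqP/matrixP => i k; rewrite !mxE; rewrite ?(ord1 k).
  by move: (H i) => /negbNE /eqP.
move=> /(eq_bigmax_cond (fun i : 'I_n => pivot Y i)) [i0 Hi0 E].
have Hdi0 : d i0 0 != 0 by exact Hi0.
have Hci0 : col i0 Y != 0 by apply: contra Hdi0 => /Hz ->.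
have [p [Hp HYp]] := pivot_att Hci0.
have := congr1 (fun M : 'cV[K]_m => M p ord0) Hd; rewrite !mxE (bigD1 i0) //= big1.
  rewrite addr0 => /eqP; rewrite mulf_eq0 (negbTE HYp) (negbTE Hdi0) //.
move=> i Hi.
have [->|Hdi] := eqVneq (d i 0) 0; first by rewrite mulr0.
have Hci : col i Y != 0 by apply: contra Hdi => /Hz ->.
have Hle : (pivot Y i <= pivot Y i0)%N.
  by rewrite -E; apply: (leq_bigmax_cond i).
have Hneq : pivot Y i != pivot Y i0 by apply: Hred.
have [->|HYpi] := eqVneq (Y p i) 0; first by rewrite mul0r.
have := pivot_ge HYpi; rewrite Hp => Hge.
by move: Hneq; rewrite eqn_leq Hle Hge.
Qed.


Definition Ek n (k : nat) : 'M[K]_n := \matrix_(i, l) ((i == l) && (i < k)%N)%:R.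

Lemma EkE n k p (Z : 'M[K]_(n, p)) i l :
  (Ek n k *m Z) i l = if (i < k)%N then Z i l else 0.
Proof.
rewrite !mxE (bigD1 i) //= big1 => [|r /negbTE Hr]; last first.
  by rewrite !mxE eq_sym Hr /= mul0r.
by rewrite !mxE eqxx /= addr0; case: (i < k)%N; rewrite ?mul1r ?mul0r.
Qed.

Definition rho m n (Y : 'M[K]_(m, n)) k := \rank (Ek n k *m Y^T).

Lemma EkS n p k (Z : 'M[K]_(n, p)) : (Ek n k *m Z <= Ek n k.+1 *m Z)%MS.
Proof.
suff -> : Ek n k *m Z = Ek n k *m (Ek n k.+1 *m Z) by apply: submxMl.
apply/matrixP => i l; rewrite !EkE.
by case: ifP => // H; rewrite ltnS ltnW.
Qed.

Lemma rho_zero m n (Y : 'M[K]_(m, n)) (j : 'I_n) :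
  col j Y == 0 -> rho Y j.+1 = rho Y j.
Proof.
move=> /eqP H; rewrite /rho; congr mxrank.
apply/matrixP => i l; rewrite !EkE ltnS leq_eqVlt.
case: (ltnP i j) => Hij; first by rewrite orbT.
rewrite orbF; case: eqP => // Hij'.
have -> : i = j by apply: val_inj.
by rewrite mxE; have := congr1 (fun M : 'cV[K]_m => M l ord0) H; rewrite !mxE.
Qed.

Lemma rho_nz m n (Y : 'M[K]_(m, n)) (j : 'I_n) :
  reduced Y -> col j Y != 0 -> (rho Y j < rho Y j.+1)%N.
Proof.
move=> Hred Hc; rewrite /rho.
have Hs := EkS j Y^T.
have [Hlt|] := ltnP (\rank (Ek n j *m Y^T)) (\rank (Ek n j.+1 *m Y^T)) => // Hge.
exfalso.
have Hs2 : (Ek n j.+1 *m Y^T <= Ek n j *m Y^T)%MS.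
  have L := mxrank_leqif_sup Hs.
  by rewrite -(geq_leqif L).
have Hrow : (row j Y^T <= Ek n j *m Y^T)%MS.
  apply: submx_trans Hs2.
  suff -> : row j Y^T = row j (Ek n j.+1 *m Y^T) by apply: row_sub.
  by apply/rowP => l; rewrite mxE [RHS]mxE EkE ltnSn.
move/submxP: Hrow => [c Hcj].
have [d0 Hd0] : exists d0 : 'rV[K]_n, d0 = c *m Ek n j - delta_mx 0 j by eexists.
pose d : 'cV[K]_n := \col_i (if col i Y == 0 then 0 else d0 0 i).
have Hd : Y *m d = 0.
  have -> : Y *m d = Y *m d0^T.
    apply/matrixP => a b; rewrite (ord1 b) !mxE; apply: eq_bigr => i _.
    rewrite !mxE; case: eqP => // /matrixP H0.
    by have := H0 a ord0; rewrite !mxE => ->; rewrite !mul0r.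
  rewrite -(trmxK (Y *m d0^T)) trmx_mul trmxK.
  suff -> : d0 *m Y^T = 0 by rewrite trmx0.
  rewrite Hd0 mulmxBl -mulmxA -Hcj.
  suff -> : delta_mx 0 j *m Y^T = row j Y^T by rewrite subrr.
  by rewrite -rowE.
have := indep Hred _ Hd.
have Hdj : d j 0 != 0.
  rewrite !mxE (negbTE Hc) Hd0 !mxE.
  rewrite big1 => [|r _]; last first.
    by rewrite /Ek mxE; case: (r =P j) => [->|_]; rewrite ?ltnn /= ?andbF mulr0.
  by rewrite !eqxx sub0r oppr_eq0 oner_eq0.
move=> Hz.
have Hdz : d = 0 by apply: Hz => i Hi; rewrite mxE Hi.
by move: Hdj; rewrite Hdz mxE eqxx.
Qed.

Lemma EkE' n p k (Z : 'M[K]_(p, n)) i l :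
  (Z *m Ek n k) i l = if (l < k)%N then Z i l else 0.
Proof.
rewrite !mxE (bigD1 l) //= big1 => [|r /negbTE Hr]; last first.
  by rewrite !mxE Hr /= mulr0.
by rewrite !mxE eqxx /= addr0; case: (l < k)%N; rewrite ?mulr1 ?mulr0.
Qed.

Lemma rho_mulV m n (X : 'M[K]_(m, n)) (V : 'M[K]_n) k :
  upper_triangular V -> V \in unitmx -> rho (X *m V) k = rho X k.
Proof.
move=> Hu HV; rewrite /rho trmx_mul.
have HE : Ek n k *m V^T = (Ek n k *m V^T) *m Ek n k.
  apply/matrixP => i l; rewrite EkE' !EkE.
  case: (ltnP i k) => // Hi; case: (ltnP l k) => // Hl.
  by rewrite mxE Hu //; apply: leq_trans Hl.
have HrV : \rank (Ek n k *m V^T) = \rank (Ek n k).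
  by apply: mxrankMfree; rewrite row_free_unit unitmx_tr.
have H1 : (Ek n k *m V^T <= Ek n k)%MS by rewrite HE submxMl.
have H2 : (Ek n k <= Ek n k *m V^T)%MS.
  by have := mxrank_leqif_sup H1; rewrite HrV => /geq_leqif <-.
apply/eqP; rewrite eqn_leq; apply/andP; split; apply: mxrankS.
  by rewrite mulmxA HE -mulmxA submxMl.
by rewrite mulmxA; apply: submxMr.
Qed.

Lemma rho_mulG m n (X : 'M[K]_(m, n)) (G : 'M[K]_m) k :
  G \in unitmx -> rho (G *m X) k = rho X k.
Proof.
move=> HG; rewrite /rho trmx_mul mulmxA; apply: mxrankMfree.
by rewrite row_free_unit unitmx_tr.
Qed.

Lemma col0_rho m n (Y : 'M[K]_(m, n)) (j : 'I_n) :
  reduced Y -> (col j Y == 0) = (rho Y j.+1 == rho Y j).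
Proof.
move=> Hr; case: (boolP (col j Y == 0)) => H.
  by rewrite (rho_zero H) eqxx.
by have := rho_nz Hr H; rewrite ltn_neqAle eq_sym => /andP [/negbTE ->].
Qed.

End Aux.

Theorem proposition3p10 (K : fieldType) (N n : nat)
    (deg deg' : 'I_n -> nat) (birth birth' : 'I_n -> 'I_N.+1)
    (D D' Fm V' Vphi : 'M[K]_n) :
  filtered_complex deg birth D ->
  filtered_complex deg' birth' D' ->
  injective_filt_morphism deg deg' birth birth' D D' Fm ->
  Fm \in unitmx ->
  upper_triangular V' -> V' \in unitmx ->
  upper_triangular Vphi -> Vphi \in unitmx ->
  reduced (D' *m V') ->
  reduced ((D *m invmx Fm) *m Vphi) ->
  forall j : 'I_n,
    (col j ((D *m invmx Fm) *m Vphi) == 0) = (col j (D' *m V') == 0).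
Proof.
move=> _ _ [HFD _ _ _] HF HuV' HV' HuVp HVp Hr' Hrp j.
have Heq : D *m invmx Fm = invmx Fm *m D'.
  rewrite -[D *m _]mul1mx -(mulVmx HF) -mulmxA (mulmxA Fm D) HFD.
  by rewrite -mulmxA mulmxV // mulmx1.
have Hrho : forall k, rho ((D *m invmx Fm) *m Vphi) k = rho (D' *m V') k.
  move=> k; rewrite (rho_mulV _ k HuVp HVp) Heq (rho_mulG _ k (etrans (unitmx_inv Fm) HF)).
  by rewrite (rho_mulV D' k HuV' HV').
by rewrite (col0_rho j Hrp) (col0_rho j Hr') !Hrho.
Qed.
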